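(* For all integers $n\ge1$ and $q\ge0$, $(q+1)^n-(n+1)q^n \le A(n,q)\le (q+1)^n$.
   Context: $A(n,q)$ is the Eulerian number, the number of permutations of $\{1,\dots,n\}$ with exactly $q$ ascents, with $A(n,q)=0$ if $q\ge n$. *)

(* Defs.v *)
From mathcomp Require Import all_boot all_order all_algebra all_fingroup.
Set Implicit Arguments. Unset Strict Implicit. Unset Printing Implicit Defensive.

Definition ascents (n : nat) (s : 'S_n) : nat :=
  #|[set i : 'I_n | [exists j : 'I_n, (val j == (val i).+1) && (s i < s j)]]|.

(* Eulerian number A(n,q): number of permutations of {1..n} with exactly
   q ascents (automatically 0 when q >= n, for n >= 1). *)
Definition eulerian (n q : nat) : nat :=
  #|[set s : 'S_n | ascents s == q]|.

(* Main.v *)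
Require Import Defs.
From mathcomp Require Import all_boot all_order all_algebra all_fingroup.
From mathcomp Require Import zify.
Set Implicit Arguments. Unset Strict Implicit. Unset Printing Implicit Defensive.

Section Sort.
Variable N : nat.
Implicit Types (w : 'I_N -> nat) (u v : 'I_N).

Definition prec w u v := (w u < w v) || ((w u == w v) && (v < u)).

Lemma prec_irr w u : prec w u u = false.
Proof. by rewrite /prec ltnn eqxx ltnn. Qed.

Lemma prec_trans w u v x : prec w u v -> prec w v x -> prec w u x.
Proof.
rewrite /prec => /orP[h1|/andP[/eqP e1 h1]] /orP[h2|/andP[/eqP e2 h2]]; apply/orP.
- by left; apply: ltn_trans h1 h2.
- by left; rewrite -e2.
- by left; rewrite e1.
- by right; rewrite e1 e2 eqxx /=; apply: ltn_trans h2 h1.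
Qed.

Lemma prec_total w u v : u != v -> prec w u v || prec w v u.
Proof.
move=> nuv; rewrite /prec; case: (ltngtP (w u) (w v)) => //= e.
rewrite ?e ?eqxx /=; case: (ltngtP u v) => //= /val_inj e2.
by rewrite e2 eqxx in nuv.
Qed.

Definition rk w v := #|[set u | prec w u v]|.

Lemma rk_lt w v : rk w v < N.
Proof.
have: [set u | prec w u v] \subset [set~ v].
  by apply/subsetP => u; rewrite !inE; apply: contraTneq => ->; rewrite prec_irr.
move/subset_leq_card; rewrite cardsC1 card_ord /rk => h.
have := ltn_ord v; lia.
Qed.

Lemma rk_mono w u v : prec w u v -> rk w u < rk w v.
Proof.
move=> h; apply: proper_card; apply/properP; split.
  by apply/subsetP => x; rewrite !inE => hx; apply: prec_trans hx h.
by exists u; rewrite !inE ?prec_irr.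
Qed.

Lemma rk_prec w u v : (rk w u < rk w v) = prec w u v.
Proof.
apply/idP/idP; last exact: rk_mono.
have [->|nuv] := eqVneq u v; first by rewrite ltnn.
case/orP: (prec_total w nuv) => // /rk_mono h1 h2.
by have := ltn_trans h1 h2; rewrite ltnn.
Qed.

Lemma rk_inj w : injective (fun v => Ordinal (rk_lt w v)).
Proof.
move=> u v [] e; apply/eqP; apply/negPn/negP => nuv.
by case/orP: (prec_total w nuv) => /rk_mono; rewrite e ltnn.
Qed.

Definition rho w : 'S_N := perm (@rk_inj w).
Definition sig w : 'S_N := (rho w)^-1.

Lemma rho_val w v : val (rho w v) = rk w v.
Proof. by rewrite permE. Qed.

Lemma sig_prec w (i j : 'I_N) : i < j -> prec w (sig w i) (sig w j).
Proof.
by rewrite -rk_prec -!rho_val /sig !permKV.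
Qed.

Lemma card_lt (i : nat) : i <= N -> #|[set j : 'I_N | j < i]| = i.
Proof.
move=> le; have -> : [set j : 'I_N | j < i] = widen_ord le @: setT.
  apply/setP => j; rewrite !inE; apply/idP/imsetP.
    by move=> hj; exists (Ordinal hj) => //; apply: val_inj.
  by case=> k _ ->; rewrite /= ltn_ord.
rewrite card_imset ?cardsT ?card_ord //.
by move=> a b /(congr1 val) /= /val_inj.
Qed.

Lemma sort_uniq w (s : 'S_N) :
  (forall i j : 'I_N, i < j -> prec w (s i) (s j)) -> s = sig w.
Proof.
move=> H.
have hr : forall i, rho w (s i) = i.
  move=> i; apply: val_inj; rewrite rho_val /rk.
  have -> : [set u | prec w u (s i)] = s @: [set j : 'I_N | j < i].
    apply/setP => u; rewrite !inE; apply/idP/imsetP.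
      move=> hu; exists (s^-1 u)%g; last by rewrite permKV.
      rewrite inE; case: (ltngtP (s^-1 u)%g i) => // h.
        by have := prec_trans hu (H _ _ h); rewrite permKV prec_irr.
      by move/val_inj: h => h; rewrite -h permKV prec_irr in hu.
    by case=> j; rewrite inE => hj ->; apply: H.
  by rewrite card_imset ?card_lt 1?ltnW //; apply: perm_inj.
apply/permP => i; by rewrite /sig -{2}(hr i) permK.
Qed.

End Sort.
Section Pos.
Variable n' : nat.
Local Notation N := n'.+1.
Implicit Types (w : 'I_N -> nat) (s : 'S_N).

Definition ascb s (i : nat) : bool := (i < n') && (s (inord i) < s (inord i.+1)).
Definition cnt s (m : nat) := \sum_(i < m) ascb s i.
Definition L w s (i : nat) := w (s (inord i)).
Definition compat w s := forall i, i < n' -> L w s i + ascb s i <= L w s i.+1.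

Lemma cntS s m : cnt s m.+1 = cnt s m + ascb s m.
Proof. by rewrite /cnt big_ord_recr. Qed.

Lemma cnt_mono s m k : m <= k -> cnt s m <= cnt s k.
Proof.
elim: k => [|k IH]; first by rewrite leqn0 => /eqP ->.
rewrite leq_eqVlt => /orP[/eqP -> //|h].
by rewrite cntS; apply: leq_trans (IH h) (leq_addr _ _).
Qed.

Lemma cntN s : cnt s N = cnt s n'.
Proof. by rewrite cntS /ascb ltnn /= addn0. Qed.

Lemma ascents_cnt s : ascents s = cnt s N.
Proof.
rewrite /ascents -sum1_card big_mkcond /cnt /=; apply: eq_bigr => i _.
rewrite inE /ascb.
have -> : [exists j : 'I_N, (val j == (val i).+1) && (s i < s j)] =
          ((i < n') && (s (inord i) < s (inord i.+1))).
  apply/existsP/andP.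
    case=> j /andP[/eqP /= hj h]; split; first by have := ltn_ord j; rewrite hj.
    have hlt : i.+1 < N by rewrite -hj.
    have -> : (inord i.+1 : 'I_N) = j by apply: val_inj; rewrite /= inordK.
    by rewrite inord_val.
  case=> hi h; exists (inord i.+1); rewrite /= inordK ?eqxx //=.
  by rewrite inord_val in h.
by case: (_ && _).
Qed.

Lemma compat_prec w s : compat w s -> forall i j : 'I_N, i < j -> prec w (s i) (s j).
Proof.
move=> C.
have step : forall i, i < n' -> prec w (s (inord i)) (s (inord i.+1)).
  move=> i hi; have := C i hi; rewrite /L /ascb hi /= /prec.
  case hlt: (s (inord i) < s (inord i.+1)) => /=.
    by rewrite addn1 => ->.
  have hne : (s (inord i.+1) : nat) != s (inord i).
    apply/eqP => /ord_inj /perm_inj /(congr1 val) /=.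
    by rewrite !inordK // ?(ltnW hi) //; lia.
  have hgt : s (inord i.+1) < s (inord i) by rewrite ltn_neqAle hne leqNgt hlt.
  by rewrite hgt andbT addn0 leq_eqVlt => /orP[/eqP ->|->] //; rewrite eqxx orbT.
have gen : forall d i, i + d.+1 <= n' -> prec w (s (inord i)) (s (inord (i + d.+1))).
  elim=> [|d IH] k hk; first by rewrite addn1; apply: step; rewrite -addn1.
  apply: prec_trans (IH k _) _; first by lia.
  have := step (k + d.+1); rewrite -addnS; apply; lia.
move=> i j hij.
have := gen (j - i).-1 i; rewrite !inord_val.
have -> : i + (j - i).-1.+1 = j by lia.
rewrite inord_val; apply; have := ltn_ord j; lia.
Qed.

Lemma compat_sig w : compat w (sig w).
Proof.
move=> i hi; have := sig_prec w (i := inord i) (j := inord i.+1).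
rewrite !inordK //; last by apply: ltnW.
move=> /(_ (ltnSn _)); rewrite /prec /L /ascb hi /=.
case/orP=> [h|/andP[/eqP -> h]].
  by case: (_ < _); rewrite ?addn1 ?addn0 // ltnW.
by rewrite ltnNge (ltnW h) addn0.
Qed.

Lemma cnt_le w s : compat w s -> forall m, m <= n' -> cnt s m <= L w s m.
Proof.
move=> C; elim=> [|m IH] hm; first by rewrite /cnt big_ord0.
rewrite cntS; apply: leq_trans (C m hm); rewrite leq_add2r; apply: IH; lia.
Qed.

Lemma b_mono w s : compat w s -> forall i j, i <= j -> j <= n' ->
  L w s i - cnt s i <= L w s j - cnt s j.
Proof.
move=> C i; elim=> [|j IH] hij hj; first by move: hij; rewrite leqn0 => /eqP ->.
move: hij; rewrite leq_eqVlt => /orP[/eqP -> //|hij].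
have := IH hij (ltnW hj); have := C j hj; rewrite cntS.
have := cnt_le C (ltnW hj); lia.
Qed.

End Pos.
Section Main.
Variables n' q : nat.
Local Notation N := n'.+1.
Local Notation word := {ffun 'I_N -> 'I_q.+1}.
Definition wv (f : word) : 'I_N -> nat := fun v => val (f v).

Lemma compat_cnt (w : 'I_N -> nat) (s : 'S_N) : compat w s -> (forall v, w v <= q) ->
  ascents s <= q.
Proof.
move=> C B; rewrite ascents_cnt cntN; apply: leq_trans (cnt_le C (leqnn _)) _.
exact: B.
Qed.

Lemma permV_inord (s : 'S_N) v : s (inord ((s^-1)%g v)) = v.
Proof. by rewrite inord_val permKV. Qed.

Lemma L_perm (w : 'I_N -> nat) (s : 'S_N) v : L w s ((s^-1)%g v) = w v.
Proof. by rewrite /L permV_inord. Qed.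

Definition F (s : 'S_N) : word := [ffun v => inord (cnt s ((s^-1)%g v))].

Lemma F_val s v : ascents s = q -> wv (F s) v = cnt s ((s^-1)%g v).
Proof.
move=> hq; rewrite /wv ffunE /= inordK // ltnS -hq ascents_cnt.
by apply: cnt_mono; apply: ltnW.
Qed.

Lemma F_sig s : ascents s = q -> s = sig (wv (F s)).
Proof.
move=> hq; apply: sort_uniq; apply: compat_prec => i hi.
rewrite /L !F_val // !permK !inordK //; last by apply: ltnW.
by rewrite cntS.
Qed.

Lemma upper : eulerian N q <= q.+1 ^ N.
Proof.
rewrite /eulerian -(card_in_imset (f := F)).
  by apply: leq_trans (max_card _) _; rewrite card_ffun !card_ord.
move=> s1 s2; rewrite !inE => /eqP h1 /eqP h2 e.
by rewrite (F_sig h1) (F_sig h2) e.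
Qed.

End Main.
Lemma thr (n' : nat) (b : nat -> nat) :
  (forall i j, i <= j -> j <= n' -> b i <= b j) ->
  forall i, i < n'.+1 -> (0 < b i) = (find (fun i => 0 < b i) (iota 0 n'.+1) <= i).
Proof.
move=> M i hi; set K := find _ _.
case: (ltnP i K) => h.
  by have := before_find 0 h; rewrite nth_iota.
have hK : K < n'.+1 by apply: leq_ltn_trans h hi.
have := nth_find 0 (_ : has (fun i => 0 < b i) (iota 0 n'.+1)).
rewrite has_find size_iota -/K => /(_ hK); rewrite nth_iota // add0n => hb.
by apply: leq_trans hb (M _ _ h _).
Qed.

Lemma compat_ext n' (w1 w2 : 'I_n'.+1 -> nat) s : w1 =1 w2 -> compat w1 s -> compat w2 s.
Proof. by move=> e C i hi; rewrite /L -!e; apply: C. Qed.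

Lemma determined n' q (w : 'I_n'.+1 -> nat) s : compat w s -> ascents s = q ->
  (forall v, w v <= q) -> forall v, w v = cnt s ((s^-1)%g v).
Proof.
move=> C hq B v; rewrite -(L_perm w s v).
have hi : (s^-1)%g v <= n' by rewrite -ltnS.
have := b_mono C hi (leqnn _); have := cnt_le C hi.
have := B (s (inord n')); rewrite -/(L w s n') -hq ascents_cnt cntN; lia.
Qed.

Lemma slack_compat n' (w : 'I_n'.+1 -> nat) s : compat w s ->
  compat (fun v => w v - (0 < L w s ((s^-1)%g v) - cnt s ((s^-1)%g v))) s.
Proof.
move=> C i hi.
have E : forall j, j <= n' -> L (fun v => w v - (0 < L w s ((s^-1)%g v) - cnt s ((s^-1)%g v))) s j
                        = L w s j - (0 < L w s j - cnt s j).
  by move=> j hj; rewrite {1}/L permK inordK.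
rewrite !E //; last by apply: ltnW.
have := C i hi; rewrite cntS.
have := cnt_le C (ltnW hi); have := cnt_le C hi.
case: (ascb s i); case: (ltnP 0 (L w s i - cnt s i)); case: (ltnP 0 (L w s i.+1 - (cnt s i + _)));
  rewrite /=; lia.
Qed.
Definition Pw n' q (f : {ffun 'I_n'.+1 -> 'I_q.+1}) := ascents (sig (wv f)) == q.

Lemma wv_le n' q (f : {ffun 'I_n'.+1 -> 'I_q.+1}) v : wv f v <= q.
Proof. by rewrite /wv -ltnS ltn_ord. Qed.

Lemma part1 n' q : #|[set f : {ffun 'I_n'.+1 -> 'I_q.+1} | Pw f]| <= eulerian n'.+1 q.
Proof.
rewrite -(card_in_imset (f := fun f => sig (wv f))).
  apply: subset_leq_card; apply/subsetP => s /imsetP [f]; rewrite !inE => hf ->.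
  exact: hf.
move=> f1 f2; rewrite !inE /Pw => /eqP h1 /eqP h2 e.
apply/ffunP => v; apply: val_inj.
have d1 := determined (compat_sig (wv f1)) h1 (@wv_le _ _ f1) v.
have d2 := determined (compat_sig (wv f2)) h2 (@wv_le _ _ f2) v.
by move: d1 d2; rewrite /wv => -> ->; rewrite e.
Qed.

Lemma part2_0 n' : #|~: [set f : {ffun 'I_n'.+1 -> 'I_0.+1} | Pw f]| = 0.
Proof.
apply/eqP; rewrite cards_eq0; apply/eqP/setP => f; rewrite !inE /Pw.
by have := compat_cnt (compat_sig (wv f)) (@wv_le _ _ f); rewrite leqn0 => ->.
Qed.

Section Part2.
Variables n' q' : nat.
Local Notation N := n'.+1.
Local Notation word := {ffun 'I_N -> 'I_q'.+2}.

Definition sf (f : word) := sig (wv f).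
Definition bb (f : word) i := L (wv f) (sf f) i - cnt (sf f) i.
Definition KK (f : word) := find (fun i => 0 < bb f i) (iota 0 N).
Definition W' (f : word) v := wv f v - (0 < bb f ((sf f)^-1 v)%g).
Definition G (f : word) : 'I_N.+1 * {ffun 'I_N -> 'I_q'.+1} :=
  (inord (KK f), [ffun v => inord (W' f v)]).

Lemma W'_le f : ~~ Pw f -> forall v, W' f v <= q'.
Proof.
rewrite /Pw => hP v; rewrite /W' /bb.
have C := compat_sig (wv f).
have hA := compat_cnt C (@wv_le _ _ f).
have hi : ((sf f)^-1)%g v <= n' by rewrite -ltnS.
have := cnt_mono (sf f) (ltnW (ltn_ord (((sf f)^-1)%g v))).
rewrite -ascents_cnt; rewrite L_perm.
have := wv_le f v.
move: hP hA; rewrite /sf; case: (ltnP 0 _) => /= h /eqP; lia.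
Qed.

Lemma G_inj : {in ~: [set f | Pw f] &, injective G}.
Proof.
move=> f1 f2; rewrite !inE => h1 h2 [eK eW].
have eW' : W' f1 =1 W' f2.
  move=> v; have := congr1 (fun g : {ffun 'I_N -> 'I_q'.+1} => val (g v)) eW; rewrite /= !ffunE /=.
  by rewrite !inordK // ltnS W'_le.
have C1 := slack_compat (compat_sig (wv f1)).
have C2 := slack_compat (compat_sig (wv f2)).
have es1 : sf f1 = sig (W' f1) by apply: sort_uniq; apply: compat_prec; exact: C1.
have es2 : sf f2 = sig (W' f1).
  apply: sort_uniq; apply: compat_prec; apply: compat_ext C2 => v; exact/esym/eW'.
have es : sf f2 = sf f1 by rewrite es1 es2.
have hK : KK f1 = KK f2.
  have hb : forall f, KK f < N.+1.
    by move=> f; rewrite ltnS /KK; apply: leq_trans (find_size _ _) _; rewrite size_iota.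
  by have := congr1 val eK; rewrite /= !inordK.
have thr1 := thr (b_mono (compat_sig (wv f1))).
have thr2 := thr (b_mono (compat_sig (wv f2))).
apply/ffunP => v; apply: val_inj.
have e1 : wv f1 v = W' f1 v + (0 < bb f1 ((sf f1)^-1 v)%g).
  rewrite /W' /bb L_perm; case: (ltnP 0 _) => /=; lia.
have e2 : wv f2 v = W' f2 v + (0 < bb f2 ((sf f2)^-1 v)%g).
  rewrite /W' /bb L_perm; case: (ltnP 0 _) => /=; lia.
move: e1 e2; rewrite /wv => -> ->; rewrite eW' /bb.
rewrite thr1 // thr2 //; rewrite -/(bb f1) -/(bb f2) -/(KK f1) -/(KK f2) hK es.
by [].
Qed.

Lemma part2 : #|~: [set f : word | Pw f]| <= N.+1 * q'.+1 ^ N.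
Proof.
rewrite -(card_in_imset G_inj).
by apply: leq_trans (max_card _) _; rewrite card_prod card_ffun !card_ord.
Qed.

End Part2.

Lemma lower n' q : q.+1 ^ n'.+1 <= eulerian n'.+1 q + n'.+2 * q ^ n'.+1.
Proof.
have -> : q.+1 ^ n'.+1 = #|{: {ffun 'I_n'.+1 -> 'I_q.+1}}| by rewrite card_ffun !card_ord.
rewrite -(cardsC [set f | Pw f]); apply: leq_add; first exact: part1.
case: q => [|q']; first by rewrite part2_0.
exact: part2.
Qed.

Import GRing.Theory Num.Theory.
Local Open Scope ring_scope.

Theorem mainTheorem18 (n q : nat) (hn : (1 <= n)%N) :
  ((q + 1) ^ n)%:Z - ((n + 1) * q ^ n)%:Z <= (eulerian n q)%:Z /\
  (eulerian n q <= (q + 1) ^ n)%N.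
Proof.
case: n hn => // n' _; rewrite !addn1; split; last exact: upper.
rewrite lerBlDr -PoszD lez_nat; exact: lower.
Qed.
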